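(* Let $\mathbb{N}$ be the natural numbers with the usual order and $\Sigma\mathbb{N}$ its Scott space (whose nonempty open sets are exactly the sets ${\uparrow}k$, $k\in\mathbb{N}$). Then $\Sigma\mathbb{N}$ is $S^{\ast}$-well-filtered but not well-filtered (hence not strongly well-filtered).
   Context: All spaces are $T_0$. The specialization order of $X$ is given by $x\le y$ iff $x\in cl(\{y\})$; ${\uparrow}$ is taken with respect to it; a subset is saturated if it is an upper set in the specialization order. $K(X)$ denotes the set of all nonempty compact saturated subsets of $X$; a family in $K(X)$ is filtered if any two members contain a common member. $X$ is well-filtered if for every filtered family $\{K_i\}\subseteq K(X)$ and every open $U$, $\bigcap_i K_i\subseteq U$ implies $K_i\subseteq U$ for some $i$. $X$ is strongly well-filtered if for every filtered $\{K_i\mid i\in I\}\subseteq K(X)$, every $G\in K(X)$ and every open $U$, $\bigcap_i K_i\cap G\subseteq U$ implies $K_i\cap G\subseteq U$ for some $i$. $X$ is $S^{\ast}$-well-filtered if this last implication holds for every nonempty open $U$. *)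

(* Defs.v *)
From HB Require Import structures.
From mathcomp Require Import all_boot all_order.
From mathcomp Require Import all_classical.
From mathcomp Require Import topology.
Set Implicit Arguments. Unset Strict Implicit. Unset Printing Implicit Defensive.
Local Open Scope classical_set_scope.

Definition spec_le {X : topologicalType} (x y : X) : Prop :=
  closure [set y] x.

Definition saturated {X : topologicalType} (A : set X) : Prop :=
  forall x y : X, A x -> spec_le x y -> A y.

Definition KX {X : topologicalType} (K : set X) : Prop :=
  [/\ K !=set0, compact K & saturated K].

Definition filtered_KX {X : topologicalType} (F : set (set X)) : Prop :=
  [/\ F `<=` KX, F !=set0 &
      forall A B, F A -> F B -> exists2 C, F C & C `<=` A `&` B].

Definition well_filtered (X : topologicalType) : Prop :=
  forall (F : set (set X)) (U : set X), filtered_KX F -> open U ->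
    \bigcap_(A in F) A `<=` U -> exists2 A, F A & A `<=` U.

Definition strongly_well_filtered (X : topologicalType) : Prop :=
  forall (F : set (set X)) (G U : set X), filtered_KX F -> KX G -> open U ->
    (\bigcap_(A in F) A) `&` G `<=` U -> exists2 A, F A & A `&` G `<=` U.

Definition S_star_well_filtered (X : topologicalType) : Prop :=
  forall (F : set (set X)) (G U : set X), filtered_KX F -> KX G -> open U ->
    U !=set0 ->
    (\bigcap_(A in F) A) `&` G `<=` U -> exists2 A, F A & A `&` G `<=` U.

Definition is_sup_nat (D : set nat) (s : nat) : Prop :=
  (forall d, D d -> (d <= s)%N) /\
  (forall t, (forall d, D d -> (d <= t)%N) -> (s <= t)%N).

Definition directed_nat (D : set nat) : Prop :=
  D !=set0 /\ forall a b, D a -> D b -> exists2 c, D c & (a <= c)%N && (b <= c)%N.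

Definition scott_open_nat (U : set nat) : Prop :=
  (forall x y, U x -> (x <= y)%N -> U y) /\
  (forall D s, directed_nat D -> is_sup_nat D s -> U s -> D `&` U !=set0).

Lemma scott_openT : scott_open_nat setT.
Proof.
split=> // D s [[d Dd] _] _ _; by exists d.
Qed.

Lemma scott_openI : setI_closed scott_open_nat.
Proof.
move=> U V [uU iU] [uV iV]; split.
  by move=> x y [Ux Vx] xy; split; [exact: uU Ux xy|exact: uV Vx xy].
move=> D s dirD supD [Us Vs].
have [d1 [Dd1 Ud1]] := iU D s dirD supD Us.
have [d2 [Dd2 Vd2]] := iV D s dirD supD Vs.
have [c Dc /andP[h1 h2]] := dirD.2 _ _ Dd1 Dd2.
exists c; split=> //; split; [exact: uU Ud1 h1|exact: uV Vd2 h2].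
Qed.

Lemma scott_open_bigU (I : Type) (f : I -> set nat) :
  (forall i, scott_open_nat (f i)) -> scott_open_nat (\bigcup_i f i).
Proof.
move=> hf; split.
  by move=> x y [i _ fxi] xy; exists i => //; exact: (hf i).1 _ _ fxi xy.
move=> D s dirD supD [i _ fis].
have [d [Dd fid]] := (hf i).2 D s dirD supD fis.
by exists d; split=> //; exists i.
Qed.

Definition scottN : Type := nat.
HB.instance Definition _ := Choice.on scottN.
HB.instance Definition _ := isOpenTopological.Build scottN
  scott_openT scott_openI scott_open_bigU.

(* Main.v *)
Require Import Defs.
From mathcomp Require Import all_boot all_order all_classical topology.
Local Open Scope classical_set_scope.

Definition up (n : nat) : set scottN := [set x | (n <= x)%N].

Lemma up_open n : open (up n).
Proof.
split; first by move=> x y /= h1 h2; exact: leq_trans h1 h2.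
move=> D s [[d0 Dd0] _] [ub lub] /= ns.
apply: contrapT => hno.
have hall : forall d, D d -> (d < n)%N.
  move=> d Dd; rewrite ltnNge; apply/negP => h; apply: hno; by exists d.
case: n ns hall hno => [|n] ns hall hno; first by have := hall _ Dd0.
have : (s <= n)%N by apply: lub => d /hall.
by rewrite leqNgt ns.
Qed.

Lemma open_upper (U : set scottN) x y : open U -> U x -> (x <= y)%N -> U y.
Proof. by move=> [h _]; exact: h. Qed.

Lemma nbhs_up (x : scottN) B : nbhs x B -> up x `<=` B.
Proof.
rewrite nbhsE => -[V [oV Vx] VB] y /= xy; apply: VB.
exact: open_upper oV Vx xy.
Qed.

Lemma spec_leE (x y : scottN) : spec_le x y <-> (x <= y)%N.
Proof.
split.
  move=> h; have [z [/= -> xz]] := h (up x) (open_nbhs_nbhs (conj (up_open x) (leqnn x))).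
  exact: xz.
move=> xy B /nbhs_up hB; exists y; split => //; exact: hB.
Qed.

Lemma sat_upper (A : set scottN) x y : saturated A -> A x -> (x <= y)%N -> A y.
Proof. by move=> h Ax /spec_leE; exact: h. Qed.

Lemma KX_up n : KX (up n).
Proof.
split; first by exists n; rewrite /up /=.
  move=> F PF Fn; exists n; split; first by rewrite /up /=.
  move=> A B FA /nbhs_up hB.
  have [z [Az nz]] := filter_ex (filterI FA Fn).
  by exists z; split => //; exact: hB.
move=> x y /= nx /spec_leE xy; exact: leq_trans nx xy.
Qed.

Definition Fup : set (set scottN) := [set A | exists n, A = up n].

Lemma Fup_filtered : filtered_KX Fup.
Proof.
split.
- by move=> A [n ->]; exact: KX_up.
- by exists (up 0); exists 0.
- move=> A B [a ->] [b ->]; exists (up (maxn a b)); first by exists (maxn a b).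
  move=> x /= h; split => /=; apply: leq_trans h; [exact: leq_maxl|exact: leq_maxr].
Qed.

Lemma Fup_cap : \bigcap_(A in Fup) A `<=` set0.
Proof.
move=> x hx; have := hx (up x.+1) (ex_intro _ x.+1 erefl).
by rewrite /up /= ltnn.
Qed.

Lemma S_star : S_star_well_filtered scottN.
Proof.
move=> F G U [FK [A0 FA0] Ffilt] KG oU [u Uu] hsub.
have Kmin : forall A, F A -> exists m, A m.
  by move=> A /FK [[m Am] _ _]; exists m.
have ex_min : forall A (FA : F A), exists m, A m /\ forall y, A y -> (m <= y)%N.
  move=> A FA; have hex : exists m, A m by exact: Kmin.
  pose P := fun m => `[< A m >].
  have hP : exists m, P m by case: hex => m Am; exists m; apply/asboolP.
  exists (ex_minn hP); case: ex_minnP => m /asboolP Am hm; split => // y Ay.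
  by apply: hm; apply/asboolP.
have upA : forall A, F A -> forall x y, A x -> (x <= y)%N -> A y.
  by move=> A /FK [_ _ sA] x y; exact: sat_upper.
have [big|small] := pselect (exists A, F A /\ forall y, A y -> (u <= y)%N).
  case: big => A [FA hA]; exists A => // x [Ax _].
  exact: open_upper oU Uu (hA _ Ax).
have hsm : forall A, F A -> exists2 x, A x & (x < u)%N.
  move=> A FA; apply: contrapT => hn; apply: small; exists A; split => // y Ay.
  rewrite leqNgt; apply/negP => yu; apply: hn; by exists y.
(* choose the A in F whose min is maximal; bounded by u *)
pose Q := fun k => `[< exists A, F A /\ (forall y, A y -> (k <= y)%N) >].
have Q0 : Q 0 by apply/asboolP; exists A0.
have Qb : forall k, Q k -> (k <= u)%N.
  move=> k /asboolP [A [FA hA]]; have [x Ax xu] := hsm A FA.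
  exact: ltnW (leq_ltn_trans (hA _ Ax) xu).
have hQ : exists k, Q k by exists 0.
case: (ex_maxnP hQ Qb) => k /asboolP [A [FA hA]] kmax.
exists A => // x [Ax Gx]; apply: hsub; split => // B FB.
have [C FC CAB] := Ffilt _ _ FA FB.
have [c [Cc cmin]] := ex_min C FC.
have ck : (c <= k)%N by apply: kmax; apply/asboolP; exists C.
have Ac : A c by have := CAB _ Cc => -[].
have kc : (k <= c)%N := hA _ Ac.
have [a [Aa amin]] := ex_min A FA.
have ax : (a <= x)%N := amin _ Ax.
have ka : (k <= a)%N := hA _ Aa.
have ca : (c <= a)%N := leq_trans ck ka.
have : C x by apply: upA FC c x Cc (leq_trans ca ax).
by move=> /CAB [].
Qed.

Theorem mainTheorem9 :
  S_star_well_filtered scottN /\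
  ~ well_filtered scottN /\ ~ strongly_well_filtered scottN.
Proof.
split; first exact: S_star.
split.
  move=> h; have [A [n ->]] := h Fup set0 Fup_filtered open0 Fup_cap.
  by move=> /(_ n (leqnn n)).
move=> h.
have hsub : (\bigcap_(A in Fup) A) `&` setT `<=` (set0 : set scottN).
  by move=> x [/Fup_cap].
have KT : KX (setT : set scottN).
  have -> : (setT : set scottN) = up 0.
    by apply/seteqP; split => x // _; rewrite /up /=.
  exact: KX_up.
have [A [n ->]] := h Fup setT set0 Fup_filtered KT open0 hsub.
by move=> /(_ n (conj (leqnn n) I)).
Qed.
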